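(* Let $F=F_2$ be the free group on $x,y$, $F^{(1)}=[F,F]$, $F^{(2)}=[F^{(1)},F^{(1)}]$, let $w\in F^{(1)}\setminus F^{(2)}$, and suppose $\Phi_w(1,i)\neq 0$, where $i^2=-1$. Then $-\mathrm{id}$ lies in the image of the word map $w:\mathrm{SL}(2,\mathbb{C})^2\to\mathrm{SL}(2,\mathbb{C})$.
   Context: Write $[a,b]=aba^{-1}b^{-1}$ and $w_{n,m}=[x^n,y^m]$ for nonzero integers $n,m$. Every $w\in F^{(1)}$ has a unique shortest expression $w=\prod_{j=1}^r w_{n_j,m_j}^{s_j}$ with $s_j\ne0$ (the $w_{n,m}$ freely generate $F^{(1)}$). $\mathrm{Supp}(w)$ is the set of pairs $(n,m)$ with $w_{n,m}$ occurring, and $R_w(n,m)$ is the sum of the exponents of all occurrences of $w_{n,m}$. Define $$\Phi_w(\lambda,\mu)=\sum_{(\alpha,\beta)\in \mathrm{Supp}(w)} R_w(\alpha,\beta)\,\mathrm{sgn}(\alpha)\,(1-\mu^{2\beta})\,\lambda^{\alpha-|\alpha|+1}\,\frac{\lambda^{2|\alpha|}-1}{\lambda^2-1},$$ where $\frac{\lambda^{2|\alpha|}-1}{\lambda^2-1}=1+\lambda^2+\dots+\lambda^{2(|\alpha|-1)}$ is a polynomial, so that $\Phi_w(1,i)$ is defined. *)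

(* Defs.v *)
From HB Require Import structures.
From mathcomp Require Import all_boot all_order all_algebra.
From mathcomp Require Import reals complex.
Set Implicit Arguments. Unset Strict Implicit. Unset Printing Implicit Defensive.
Import Order.TTheory GRing.Theory Num.Theory.
Local Open Scope ring_scope.

(* A letter is (g, e): g = false is x, g = true is y; e = false is the
   generator itself, e = true its inverse. *)
Definition letter := (bool * bool)%type.
Definition linv (a : letter) : letter := (a.1, ~~ a.2).

Definition reduce (s : seq letter) : seq letter :=
  foldr (fun a acc => match acc with
                      | b :: t => if b == linv a then t else a :: acc
                      | [::] => [:: a] end) [::] s.

Definition fmul (u v : seq letter) : seq letter := reduce (u ++ v).
Definition finv (u : seq letter) : seq letter := reduce (rev (map linv u)).
Definition fcomm (u v : seq letter) : seq letter :=
  fmul u (fmul v (fmul (finv u) (finv v))).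

Definition fpow (u : seq letter) (k : int) : seq letter :=
  match k with
  | Posz n => iter n (fmul u) [::]
  | Negz n => iter n.+1 (fmul (finv u)) [::]
  end.

Definition fx : seq letter := [:: (false, false)].
Definition fy : seq letter := [:: (true, false)].

Inductive derived (S : seq letter -> Prop) : seq letter -> Prop :=
  | derived_one : derived S [::]
  | derived_comm a b : S a -> S b -> derived S (fcomm a b)
  | derived_mul u v : derived S u -> derived S v -> derived S (fmul u v)
  | derived_inv u : derived S u -> derived S (finv u).

Definition F1 : seq letter -> Prop := derived (fun _ => True).
Definition F2 : seq letter -> Prop := derived F1.

Definition wnm (n m : int) : seq letter := fcomm (fpow fx n) (fpow fy m).

(* an expression is a list of triples ((n_j, m_j), s_j) *)
Definition expr := seq ((int * int) * int).

Definition expr_word (l : expr) : seq letter :=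
  foldr (fun t acc => fmul (fpow (wnm t.1.1 t.1.2) t.2) acc) [::] l.

Definition reduced_expr (l : expr) : Prop :=
  (forall t, t \in l -> [/\ t.1.1 != 0, t.1.2 != 0 & t.2 != 0]) /\
  (forall j, (j.+1 < size l)%N ->
     (nth ((0,0),0) l j).1 != (nth ((0,0),0) l j.+1).1).

Definition Supp (l : expr) : seq (int * int) := undup (map fst l).
Definition Rw (l : expr) (p : int * int) : int :=
  \sum_(t <- l | t.1 == p) t.2.

Definition Phi {C : unitRingType} (l : expr) (lam mu : C) : C :=
  \sum_(p <- Supp l)
     (Rw l p)%:~R * (sgz p.1)%:~R * (1 - mu ^ (2 * p.2))
       * lam ^ (p.1 - `|p.1| + 1)
       * \sum_(k < `|p.1|%N) lam ^+ (2 * k).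

Definition eval_letter {C : comUnitRingType} (A B : 'M[C]_2) (a : letter)
  : 'M[C]_2 :=
  let g := if a.1 then B else A in if a.2 then g^-1 else g.

Definition word_map {C : comUnitRingType} (w : seq letter) (A B : 'M[C]_2)
  : 'M[C]_2 := \prod_(a <- w) eval_letter A B a.

(* Main.v *)
Require Import Defs.
From HB Require Import structures.
From mathcomp Require Import all_boot all_order all_algebra.
From mathcomp Require Import reals complex ring.
Import Order.TTheory GRing.Theory Num.Theory.
Local Open Scope ring_scope.

Section Mx.
Variable C : numClosedFieldType.

Lemma det2 (M : 'M[C]_2) : \det M = M 0 0 * M 1 1 - M 0 1 * M 1 0.
Proof.
rewrite (expand_det_row _ 0) big_ord_recl big_ord1 /cofactor !det_mx11 !mxE /=.
rewrite expr0 expr1 mul1r.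
have -> : lift 0 (0 : 'I_1) = 1 :> 'I_2 by apply/val_inj.
have -> : lift 1 (0 : 'I_1) = 0 :> 'I_2 by apply/val_inj.

rewrite /= ?mulN1r; ring.

Qed.

Definition Dm (mu : C) : 'M[C]_2 :=
  \matrix_(i, j) (if (i : nat) == j then (if (i : nat) == 0%N then mu else mu^-1) else 0).
Definition Bm : 'M[C]_2 :=
  \matrix_(i, j) (if (i : nat) == j then 0 else (if (i : nat) == 0%N then -1 else 1)).

Ltac mxcase := apply/matrixP; case=> [[|[|//]] ?]; case=> [[|[|//]] ?];
  rewrite !mxE ?big_ord_recl ?big_ord0 ?mxE /=.

Lemma DmM mu nu : mu != 0 -> nu != 0 -> Dm mu * Dm nu = Dm (mu * nu).
Proof. move=> h1 h2; rewrite -mulmxE; mxcase; rewrite ?invfM; ring. Qed.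

Lemma Dm1 : Dm 1 = 1.
Proof. mxcase; rewrite ?invr1 //. Qed.

Lemma Dmm1 : Dm (-1) = -1.
Proof. mxcase; rewrite ?invrN ?invr1 ?oppr0 //. Qed.

Lemma detDm mu : mu != 0 -> \det (Dm mu) = 1.
Proof. move=> h; rewrite det2 !mxE /= mulr0 subr0 divff //. Qed.

Lemma detBm : \det Bm = 1.
Proof. rewrite det2 !mxE /=; ring. Qed.

Lemma BmBm : Bm * Bm = -1.
Proof. rewrite -mulmxE; mxcase; ring. Qed.

Lemma BmDm mu : mu != 0 -> Bm * Dm mu = Dm (mu^-1) * Bm.
Proof. move=> h; rewrite -!mulmxE; mxcase; rewrite ?invrK; ring. Qed.

Lemma Dm_neq0_inv mu : mu != 0 -> (Dm mu)^-1 = Dm (mu^-1).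
Proof.
move=> h; have e : Dm mu * Dm mu^-1 = 1 by rewrite DmM ?invr_eq0 // divff // Dm1.
have u : Dm mu \is a GRing.unit.
  by rewrite unitmxE detDm // unitr1.
by rewrite -[RHS](mulKr u) e mulr1.
Qed.

Lemma Dm_unit mu : mu != 0 -> Dm mu \is a GRing.unit.
Proof. by move=> h; rewrite unitmxE detDm // unitr1. Qed.

Lemma Bm_unit : Bm \is a GRing.unit.
Proof. by rewrite unitmxE detBm unitr1. Qed.

Lemma Dm_expz mu k : mu != 0 -> (Dm mu) ^ k = Dm (mu ^ k).
Proof.
move=> h; case: k => n.
  rewrite -!exprnP; elim: n => [|n IH]; first by rewrite !expr0 Dm1.
  by rewrite !exprS IH DmM // expf_neq0.
rewrite NegzE -!exprz_inv -!exprnP Dm_neq0_inv //.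
have h' : mu^-1 != 0 by rewrite invr_eq0.
elim: n.+1 => [|k IH]; first by rewrite !expr0 Dm1.
by rewrite !exprS IH DmM // expf_neq0.
Qed.

Definition PP (V : 'M[C]_2) := forall mu, mu != 0 -> V * Dm mu = Dm mu^-1 * V.
Definition QQ (V : 'M[C]_2) := forall mu, mu != 0 -> V * Dm mu = Dm mu * V.

Lemma Bm_exp n : (if odd n then PP else QQ) (Bm ^+ n).
Proof.
elim: n => [|n IH] /=; first by move=> mu _; rewrite expr0 mul1r mulr1.
rewrite exprS; case: (odd n) IH => /= IH mu h.
  by rewrite -mulrA IH // mulrA BmDm ?invr_eq0 // invrK mulrA.
by rewrite -mulrA IH // mulrA BmDm // mulrA.
Qed.

Lemma PP_inv V : V \is a GRing.unit -> PP V -> PP V^-1.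
Proof.
move=> u hV mu h; have := hV mu^-1; rewrite invrK invr_eq0 => /(_ h) e.
by rewrite -[LHS]mulr1 -(mulrV u) mulrA -(mulrA V^-1 (Dm mu) V) -e mulKr.
Qed.

Lemma QQ_inv V : V \is a GRing.unit -> QQ V -> QQ V^-1.
Proof.
move=> u hV mu h; have e := hV mu h.
by rewrite -[LHS]mulr1 -(mulrV u) mulrA -(mulrA V^-1 (Dm mu) V) -e mulKr.
Qed.

Lemma Bm_expz m : (if odd `|m|%N then PP else QQ) (Bm ^ m).
Proof.
case: m => n.
  by rewrite -exprnP; apply: Bm_exp.
rewrite NegzE -invr_expz -exprnP /=.
have u : Bm ^+ n.+1 \is a GRing.unit by rewrite unitrX // Bm_unit.
have := Bm_exp n.+1; rewrite /=; case: (odd n) => /=.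
  exact: QQ_inv u.
exact: PP_inv u.
Qed.

Section WM.
Variable C0 : comUnitRingType.
Variables A B : 'M[C0]_2.
Hypotheses (uA : A \is a GRing.unit) (uB : B \is a GRing.unit).
Notation wm w := (word_map w A B).
Notation ev := (eval_letter A B).

Lemma ev_unit a : ev a \is a GRing.unit.
Proof. by case: a => [[] []]; rewrite /eval_letter /= ?unitrV. Qed.

Lemma ev_linv a : ev a * ev (linv a) = 1.
Proof. by case: a => [[] []]; rewrite /eval_letter /= ?mulVr ?mulrV. Qed.

Lemma wm_nil : wm [::] = 1.
Proof. by rewrite /word_map big_nil. Qed.

Lemma wm_cons a s : wm (a :: s) = ev a * wm s.
Proof. by rewrite /word_map big_cons. Qed.

Lemma wm_cat s t : wm (s ++ t) = wm s * wm t.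
Proof. by rewrite /word_map big_cat. Qed.

Lemma wm_reduce s : wm (reduce s) = wm s.
Proof.
elim: s => [|a s IH] //.
have -> : reduce (a :: s) = match reduce s with
                      | b :: t => if b == linv a then t else a :: reduce s
                      | [::] => [:: a] end by [].
rewrite wm_cons -IH; case E: (reduce s) => [|b t].
  by rewrite wm_cons wm_nil.
case: ifP => [/eqP eb|_]; last by rewrite wm_cons.
by rewrite wm_cons eb mulrA ev_linv mul1r.
Qed.

Lemma wm_fmul u v : wm (fmul u v) = wm u * wm v.
Proof. by rewrite /fmul wm_reduce wm_cat. Qed.

Lemma wm_unit s : wm s \is a GRing.unit.
Proof.
elim: s => [|a s IH]; first by rewrite wm_nil unitr1.
by rewrite wm_cons unitrMl // ev_unit.
Qed.

Lemma wm_finv u : wm (Defs.finv u) = (wm u)^-1.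
Proof.
rewrite /Defs.finv wm_reduce.
suff h : wm u * wm (rev (map linv u)) = 1.
  by rewrite -[RHS]mulr1 -h mulKr // wm_unit.
elim: u => [|a u IH]; first by rewrite !wm_nil mulr1.
rewrite /= rev_cons -cats1 wm_cat wm_cons mulrA -(mulrA (ev a)) IH mulr1.
by rewrite /word_map big_seq1 ev_linv.
Qed.

Lemma wm_fpow u k : wm (fpow u k) = (wm u) ^ k.
Proof.
case: k => n.
  rewrite /fpow -exprnP; elim: n => [|n IH]; rewrite ?wm_nil ?expr0 //= ?wm_fmul ?IH ?exprS //.
rewrite /fpow NegzE -exprz_inv -exprnP.
move: n.+1 => k; elim: k => [|m IH]; rewrite ?wm_nil ?expr0 //= wm_fmul IH exprS wm_finv //.
Qed.

Lemma wm_fcomm u v : wm (fcomm u v) = wm u * (wm v * ((wm u)^-1 * (wm v)^-1)).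
Proof. by rewrite /fcomm !wm_fmul !wm_finv. Qed.

Lemma wm_fx : wm fx = A. Proof. by rewrite /word_map big_seq1. Qed.
Lemma wm_fy : wm fy = B. Proof. by rewrite /word_map big_seq1. Qed.
End WM.

Section Main.
Variable lam : C.
Hypothesis hl : lam != 0.
Notation wm w := (word_map w (Dm lam) Bm).

Lemma wm_wnm n m :
  wm (wnm n m) = Dm (if odd `|m|%N then lam ^ n * lam ^ n else 1).
Proof.
have uA := @Dm_unit lam hl.
have ln : lam ^ n != 0 by rewrite expfz_neq0.
rewrite /wnm wm_fcomm // ?Bm_unit // !wm_fpow // ?Bm_unit // wm_fx wm_fy.
rewrite Dm_expz // Dm_neq0_inv //.
have uV : Bm ^ m \is a GRing.unit.
  by have := @wm_unit _ _ _ uA Bm_unit (fpow fy m); rewrite wm_fpow // ?Bm_unit // wm_fy.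
have := Bm_expz m; case: (odd _) => /= hV.
  by rewrite [Bm ^ m * _]mulrA hV ?invr_eq0 // invrK mulrK // DmM.
by rewrite [Bm ^ m * _]mulrA hV ?invr_eq0 // mulrK // DmM ?invr_eq0 // divff // Dm1.
Qed.

Definition Ez (l : expr) : int :=
  \sum_(t <- l) (if odd `|t.1.2|%N then t.1.1 * t.2 else 0).

Lemma wm_expr l : wm (expr_word l) = Dm (lam ^ Ez l * lam ^ Ez l).
Proof.
have uA := @Dm_unit lam hl.
elim: l => [|t l IH].
  by rewrite /Ez big_nil expr0z mulr1 Dm1 /expr_word /= wm_nil.
have -> : expr_word (t :: l) = fmul (fpow (wnm t.1.1 t.1.2) t.2) (expr_word l) by [].
rewrite wm_fmul // ?Bm_unit // wm_fpow // ?Bm_unit // wm_wnm IH.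
have hE : lam ^ Ez l != 0 by rewrite expfz_neq0.
rewrite /Ez big_cons -/(Ez l) expfzDr //.
case: (odd _).
  have h2 : lam ^ t.1.1 * lam ^ t.1.1 != 0 by rewrite mulf_neq0 // expfz_neq0.
  rewrite Dm_expz // DmM ?mulf_neq0 ?expfz_neq0 //.
  by rewrite expfzMl -exprz_exp; congr Dm; ring.
by rewrite Dm1 exp1rz mul1r expr0z !mul1r.
Qed.
End Main.


Lemma sgzabs (x : int) : (sgz x)%:~R * (`|x|%N)%:R = x%:~R :> C.
Proof.
case: x => [[|n]|n].
- by rewrite sgz0 mul0r.
- by rewrite gtr0_sgz // mul1r.
- by rewrite ltr0_sgz // NegzE mulN1r.
Qed.

Lemma jpow (j : C) (hj : j ^+ 2 = -1) (m : int) :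
  1 - j ^ (2 * m) = (if odd `|m|%N then 2 else 0).
Proof.
case: m => n.
  rewrite -PoszM -exprnP exprM hj -signr_odd /=.
  by case: (odd n); rewrite ?expr0 ?expr1 ?subrr //; ring.
rewrite NegzE mulrN -PoszM -invr_expz -exprnP exprM hj -signr_odd.
have -> : `|Negz n|%N = n.+1 by [].
by case: (odd n.+1); rewrite ?expr0 ?expr1 ?invr1 ?invrN1 ?subrr //; ring.
Qed.

Lemma sum_one_seq (S : seq (int * int)) x (a : C) :
  uniq S -> x \in S -> \sum_(p <- S | x == p) a = a.
Proof.
move=> u h; rewrite big_const_seq.
have -> : count (fun p => x == p) S = 1%N.
  by rewrite (eq_count (a2 := pred1 x)) ?count_uniq_mem ?h // => p /=; rewrite eq_sym.
by rewrite /= addr0.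
Qed.

Lemma sum_supp (g : int * int -> C) l :
  \sum_(p <- Supp l) (Rw l p)%:~R * g p = \sum_(t <- l) t.2%:~R * g t.1.
Proof.
rewrite /Rw.
have hm : forall (s : seq ((int * int) * int)) (P : pred ((int*int)*int)),
   (\sum_(t <- s | P t) t.2)%:~R = \sum_(t <- s | P t) (t.2%:~R : C).
  by move=> s P; rewrite (big_morph (fun z : int => z%:~R : C) (@intrD C) (mulr0z 1)).
under eq_bigr do rewrite hm mulr_suml.
under eq_bigr => p _ do rewrite big_mkcond.
rewrite exchange_big /= [LHS]big_seq [RHS]big_seq.
apply: eq_bigr => t tl.
rewrite -big_mkcond /=.
have -> : \sum_(p <- Supp l | t.1 == p) t.2%:~R * g p
        = \sum_(p <- Supp l | t.1 == p) t.2%:~R * g t.1.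
  by apply: eq_bigr => p /eqP ->.
rewrite sum_one_seq // ?undup_uniq // mem_undup.
by apply: map_f.
Qed.

Lemma Phi_eq l (j : C) (hj : j ^+ 2 = -1) : Phi l (1 : C) j = 2 * (Ez l)%:~R.
Proof.
rewrite /Phi (eq_bigr (fun p => (Rw l p)%:~R *
     (p.1%:~R * (if odd `|p.2|%N then 2 else 0)))) => [|p _]; last first.
  rewrite exp1rz mulr1 (eq_bigr (fun _ => 1)) => [|k _]; last by rewrite expr1n.
  rewrite sumr_const card_ord jpow // -(sgzabs p.1).
  by case: (odd _); ring.
rewrite (sum_supp (fun p => p.1%:~R * (if odd `|p.2|%N then 2 else 0))) /Ez.
rewrite (big_morph (fun z : int => z%:~R : C) (@intrD C) (mulr0z 1)) mulr_sumr.
apply: eq_bigr => t _; case: (odd _); last by rewrite !mulr0.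
by rewrite intrM; ring.
Qed.

Lemma root_exists (z : int) : z != 0 -> exists r : C, r != 0 /\ r ^ z * r ^ z = -1.
Proof.
move=> hz.
have kp : (0 < 2 * `|z|)%N by rewrite muln_gt0 /= absz_gt0.
pose r := (2 * `|z|)%N.-root (-1 : C).
have hr : r ^+ (2 * `|z|) = -1 by rewrite /r rootCK.
have hr0 : r != 0.
  apply/eqP => r0; move: hr; rewrite r0 expr0n.
  by rewrite (negbTE (lt0n_neq0 kp)); move/eqP; rewrite eq_sym oppr_eq0 oner_eq0.
exists r; split => //; move: hr; clearbody r; case: z hz kp => n /= _ _ hr.
  by rewrite -exprnP -exprD addnn -mul2n.
by rewrite NegzE -invr_expz -exprnP -invfM -exprD addnn -mul2n hr invrN1.
Qed.
End Mx.

Theorem proposition6p5 (R : realType) (l : expr) :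
  reduced_expr l ->
  ~ F2 (expr_word l) ->
  Phi l (1 : R[i]) 'i != 0 ->
  exists A B : 'M[R[i]]_2,
    [/\ \det A = 1, \det B = 1 & word_map (expr_word l) A B = - 1].
Proof.
move=> _ _ hPhi.
have hi : ('i : R[i]) ^+ 2 = -1 by apply: sqrCi.
have hE : Ez l != 0.
  by apply/eqP => E0; move: hPhi; rewrite Phi_eq // E0 mulr0 eqxx.
have [r [hr0 key]] : exists r : R[i], r != 0 /\ r ^ Ez l * r ^ Ez l = -1 by apply: root_exists.
exists (@Dm _ r), (@Bm _); split.
- exact: detDm.
- exact: detBm.
- by rewrite (@wm_expr _ r hr0) key Dmm1.
Qed.
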